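(* Let $F$ be an abstract argumentation framework, let $\alpha_0(X,Y,Z)=X\cup Y$, and let $\beta_0(G,S)=1$ if $\mathrm{IS}^u(G)\cup\mathrm{IS}^{uc}(G)=\emptyset$ and $\beta_0(G,S)=0$ otherwise. For every $E$ with $(F,\emptyset)\leadsto^{\alpha_0,\beta_0}(F',E)$ for some $F'$: (1) $E\subseteq E'$ for some preferred extension $E'$ of $F$, and (2) $E_{id}\subseteq E$, where $E_{id}$ is the ideal extension of $F$.
   Context: An abstract argumentation framework (AF) is a pair $F=(A,R)$ with $A$ a finite set of arguments and $R\subseteq A\times A$ ($a\to b$ means $(a,b)\in R$). For $S\subseteq A$: $S^+=\{a\mid \exists b\in S: b\to a\}$, $S^-=\{a\mid\exists b\in S: a\to b\}$; for sets $S,S'$, $S\to S'$ means $S^+\cap S'\neq\emptyset$. $S$ is admissible if it is conflict-free and every attacker of an element of $S$ is attacked by some element of $S$. A preferred extension is an inclusion-maximal admissible set; the ideal extension is the inclusion-maximal admissible set contained in every preferred extension. An initial set is a non-empty admissible set with no non-empty admissible proper subset; $\mathrm{IS}(G)$ is the set of initial sets of $G$. An initial set $S$ is unattacked if $S^-=\emptyset$; unchallenged if $S^-\neq\emptyset$ and no $S'\in\mathrm{IS}(G)$ has $S'\to S$; challenged if some $S'\in\mathrm{IS}(G)$ has $S'\to S$. Write $\mathrm{IS}^{u}(G),\mathrm{IS}^{uc}(G),\mathrm{IS}^{c}(G)$ for these sets. The reduct is $G^S=(A',R\cap(A'\times A'))$ with $A'=A\setminus(S\cup S^+)$. Given a selection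 function $\alpha$ (mapping three sets $X,Y,Z$ of sets of arguments to a subset of $X\cup Y\cup Z$), transitions are $(G,S)\to(G^{S'},S\cup S')$ whenever $S'\in\alpha(\mathrm{IS}^u(G),\mathrm{IS}^{uc}(G),\mathrm{IS}^c(G))$. For a termination function $\beta$ (mapping pairs (AF, set) to $\{0,1\}$), $(F,S)\leadsto^{\alpha,\beta}(F',S')$ means $(F',S')$ is reachable from $(F,S)$ in finitely many (possibly zero) transitions and $\beta(F',S')=1$. *)

(* Defs.v *)
From mathcomp Require Import all_boot.
Set Implicit Arguments. Unset Strict Implicit. Unset Printing Implicit Defensive.

Section AFDefs.
Variable T : finType.

(* An AF (A, R): A is a finite set of arguments; only attacks between
   elements of A count (R is implicitly restricted to A x A). *)
Record AF := MkAF { args : {set T}; att : rel T }.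

Definition attG (G : AF) (a b : T) : bool :=
  [&& a \in args G, b \in args G & att G a b].

Definition plus (G : AF) (S : {set T}) : {set T} :=
  [set a | [exists b in S, attG G b a]].
Definition minus (G : AF) (S : {set T}) : {set T} :=
  [set a | [exists b in S, attG G a b]].
Definition attacks_set (G : AF) (S S' : {set T}) : bool :=
  plus G S :&: S' != set0.

Definition conflict_free (G : AF) (S : {set T}) : bool :=
  [forall a in S, forall b in S, ~~ attG G a b].

Definition admissible (G : AF) (S : {set T}) : bool :=
  [&& S \subset args G, conflict_free G S &
     [forall a in S, forall b, attG G b a ==> [exists c in S, attG G c b]]].

Definition preferred (G : AF) (S : {set T}) : bool :=
  admissible G S &&
  [forall S' : {set T}, (admissible G S' && (S \subset S')) ==> (S' == S)].

Definition in_all_preferred (G : AF) (S : {set T}) : bool :=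
  [forall P : {set T}, preferred G P ==> (S \subset P)].
Definition ideal (G : AF) (S : {set T}) : bool :=
  [&& admissible G S, in_all_preferred G S &
     [forall S' : {set T},
        [&& admissible G S', in_all_preferred G S' & S \subset S'] ==> (S' == S)]].

Definition initial (G : AF) (S : {set T}) : bool :=
  [&& S != set0, admissible G S &
     [forall S' : {set T}, (S' \proper S) ==> ~~ ((S' != set0) && admissible G S')]].

Definition IS (G : AF) : {set {set T}} := [set S | initial G S].
Definition ISu (G : AF) : {set {set T}} := [set S in IS G | minus G S == set0].
Definition ISuc (G : AF) : {set {set T}} :=
  [set S in IS G | (minus G S != set0) &&
                   [forall S' in IS G, ~~ attacks_set G S' S]].
Definition ISc (G : AF) : {set {set T}} :=
  [set S in IS G | [exists S' in IS G, attacks_set G S' S]].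

Definition reduct (G : AF) (S : {set T}) : AF :=
  MkAF (args G :\: (S :|: plus G S)) (att G).

Definition selection := {set {set T}} -> {set {set T}} -> {set {set T}} -> {set {set T}}.
Definition termination := AF -> {set T} -> bool.

Definition trans (alpha : selection) (G : AF) (S : {set T}) (G' : AF) (S2 : {set T}) : Prop :=
  exists S' : {set T}, S' \in alpha (ISu G) (ISuc G) (ISc G) /\
    G' = reduct G S' /\ S2 = S :|: S'.

Inductive reach (alpha : selection) : AF -> {set T} -> AF -> {set T} -> Prop :=
| reach_refl G S : reach alpha G S G S
| reach_step G S G1 S1 G2 S2 :
    trans alpha G S G1 S1 -> reach alpha G1 S1 G2 S2 -> reach alpha G S G2 S2.

Definition leadsto (alpha : selection) (beta : termination)
  (F : AF) (S : {set T}) (F' : AF) (S' : {set T}) : Prop :=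
  reach alpha F S F' S' /\ beta F' S' = true.

Definition alpha0 : selection := fun X Y Z => X :|: Y.
Definition beta0 : termination := fun G S => (ISu G :|: ISuc G) == set0.

End AFDefs.

(* Main.v *)
Require Import Defs.
From mathcomp Require Import all_boot.
Set Implicit Arguments. Unset Strict Implicit.

Section Proofs.
Variable T : finType.
Implicit Types (G : AF T) (S X : {set T}).

Lemma plusP G S x : reflect (exists2 b, b \in S & attG G b x) (x \in plus G S).
Proof.
rewrite /plus inE; apply: (iffP existsP) => [[b /andP[]]|[b]]; first by exists b.
by move=> bS h; exists b; rewrite bS.
Qed.

Lemma attG_args G a b : attG G a b -> (a \in args G) /\ (b \in args G).
Proof. by case/and3P. Qed.

Lemma admP G S : admissible G S ->
  [/\ S \subset args G, (forall a b, a \in S -> b \in S -> ~~ attG G a b) &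
      (forall a b, a \in S -> attG G b a -> exists2 c, c \in S & attG G c b)].
Proof.
case/and3P=> sub cf def; split=> //.
  by move=> a b aS bS; move/forallP: cf => /(_ a); rewrite aS /= => /forallP /(_ b); rewrite bS.
move=> a b aS h; move/forallP: def => /(_ a); rewrite aS /= => /forallP /(_ b).
by rewrite h /= => /existsP [c /andP[cS hc]]; exists c.
Qed.

Lemma admI G S : S \subset args G ->
  (forall a b, a \in S -> b \in S -> ~~ attG G a b) ->
  (forall a b, a \in S -> attG G b a -> exists2 c, c \in S & attG G c b) ->
  admissible G S.
Proof.
move=> sub cf def; rewrite /admissible sub /=; apply/andP; split.
  by apply/forallP => a; apply/implyP => aS; apply/forallP => b; apply/implyP => bS; apply: cf.
apply/forallP => a; apply/implyP => aS; apply/forallP => b; apply/implyP => h.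
by have [c cS hc] := def a b aS h; apply/existsP; exists c; rewrite cS.
Qed.

Variable F : AF T.
Definition Rd S := args F :\: (S :|: plus F S).

Lemma RdP S x : x \in Rd S -> [/\ x \in args F, x \notin S & x \notin plus F S].
Proof. by rewrite /Rd in_setD in_setU negb_or => /andP[/andP[-> ->] ->]. Qed.

Lemma plusU S S' x : (x \in plus F (S :|: S')) = (x \in plus F S) || (x \in plus F S').
Proof.
apply/plusP/orP => [[b]|[]/plusP[b bS h]]; last 2 first.
- by exists b; rewrite ?in_setU ?bS.
- by exists b; rewrite ?in_setU ?bS ?orbT.
by rewrite in_setU => /orP[] bS h; [left|right]; apply/plusP; exists b.
Qed.

Section WithG.
Variables (G : AF T) (S : {set T}).
Hypotheses (hG : args G = Rd S) (hatt : att G = att F).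

Lemma attGG a b : attG G a b -> attG F a b.
Proof.
rewrite /attG hG hatt => /and3P[/RdP[-> _ _] /RdP[-> _ _] ->]; by [].
Qed.

Lemma attFG a b : a \in Rd S -> b \in Rd S -> attG F a b -> attG G a b.
Proof. by rewrite /attG hG hatt => -> -> /and3P[_ _ ->]. Qed.

Lemma adm_union S' : admissible F S -> admissible G S' -> admissible F (S :|: S').
Proof.
move=> /admP[sS cfS defS] /admP[sS' cfS' defS'].
have S'R : forall x, x \in S' -> x \in Rd S by move=> x /(subsetP sS'); rewrite hG.
apply: admI.
- apply/subsetP => x; rewrite in_setU => /orP[/(subsetP sS)//|/S'R/RdP[]//].
- move=> a b; rewrite !in_setU => /orP[aS|aS'] /orP[bS|bS'].
  + exact: cfS.
  + apply/negP => h; have /RdP[_ _ /plusP[]] := S'R _ bS'; by exists a.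
  + apply/negP => h; have [c cS hc] := defS b a bS h.
    have /RdP[_ _ /plusP[]] := S'R _ aS'; by exists c.
  + apply/negP => h; have := cfS' a b aS' bS'.
    by rewrite (attFG (S'R _ aS') (S'R _ bS') h).
- move=> a b; rewrite in_setU => /orP[aS|aS'] h.
  + by have [c cS hc] := defS a b aS h; exists c; rewrite ?in_setU ?cS.
  + case bR: (b \in Rd S).
      have [c cS hc] := defS' a b aS' (attFG bR (S'R _ aS') h).
      by exists c; rewrite ?in_setU ?cS ?orbT // (attGG hc).
    have [bA _] := attG_args h.
    move: bR; rewrite /Rd in_setD bA andbT in_setU => /orP[bS|/plusP[c cS hc]].
      have /RdP[_ _ /plusP[]] := S'R _ aS'; by exists b.
    by exists c; rewrite ?in_setU ?cS.
Qed.

Lemma step_args S' : S' \subset args G -> args (reduct G S') = Rd (S :|: S').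
Proof.
move=> sub; apply/setP => x.
have pG : (x \in plus G S') = (x \in Rd S) && (x \in plus F S').
  apply/plusP/andP => [[b bS h]|[xR /plusP[b bS h]]].
    split; last by apply/plusP; exists b => //; exact: attGG.
    by have [_] := attG_args h; rewrite hG.
  exists b => //; apply: attFG => //; rewrite -hG; exact: (subsetP sub).
rewrite /reduct /= hG /Rd !in_setD !in_setU plusU pG /Rd !in_setD !in_setU.
by case: (x \in S); case: (x \in S'); case: (x \in plus F S); case: (x \in plus F S'); case: (x \in args F).
Qed.
End WithG.

Lemma reach_inv G S G2 S2 : reach (@alpha0 T) G S G2 S2 ->
  admissible F S -> args G = Rd S -> att G = att F ->
  [/\ admissible F S2, args G2 = Rd S2 & att G2 = att F].
Proof.
elim=> {G S G2 S2} [G S|G S G1 S1 G2 S2 [S' [hS' [-> ->]]] _ IH] aS hG hatt //.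
have aS' : admissible G S'.
  move: hS'; rewrite /alpha0 in_setU /ISu /ISuc !inE => /orP[]/andP[/and3P[_ ->] _] //.
apply: IH => //; first exact: (adm_union hG hatt).
apply: (step_args hG hatt); by case/and3P: aS'.
Qed.

Lemma pref_exists S : admissible F S -> exists P, preferred F P /\ S \subset P.
Proof.
move=> aS.
pose Q := [pred X : {set T} | admissible F X && (S \subset X)].
have QS : Q S by rewrite /= aS subxx.
case: (arg_maxnP (fun X : {set T} => #|X|) QS) => P /andP[aP SP] maxP.
exists P; split => //; rewrite /preferred aP /=.
apply/forallP => S'; apply/implyP => /andP[aS' PS'].
have := maxP S'; rewrite /= aS' (subset_trans SP PS') => /(_ isT) le.
by rewrite eq_sym eqEcard PS' le.
Qed.

Lemma init_exists G X : admissible G X -> X != set0 ->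
  exists2 S, initial G S & S \subset X.
Proof.
move=> aX nX.
pose Q := [pred Y : {set T} | [&& Y != set0, admissible G Y & Y \subset X]].
have QX : Q X by rewrite /= nX aX subxx.
case: (arg_minnP (fun Y : {set T} => #|Y|) QX) => S /and3P[nS aS SX] minP.
exists S => //; rewrite /initial nS aS /=.
apply/forallP => S'; apply/implyP => pS'; apply/negP => /andP[nS' aS'].
have := minP S'; rewrite /= nS' aS' (subset_trans (proper_sub pS') SX) => /(_ isT).
by rewrite leqNgt (proper_card pS').
Qed.

End Proofs.

Theorem theorem10 (T : finType) (F : AF T) (E : {set T}) :
  (exists F' : AF T, leadsto (@alpha0 T) (@beta0 T) F set0 F' E) ->
  (exists E' : {set T}, preferred F E' /\ E \subset E') /\
  (forall Eid : {set T}, ideal F Eid -> Eid \subset E).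
Proof.
move=> [G [hr hb]].
have a0 : admissible F set0.
  by apply: admI => [|a b|a b]; rewrite ?sub0set ?inE.
have R0 : args F = Rd F set0.
  apply/setP => x; rewrite /Rd in_setD in_setU in_set0 /=; case: (@plusP _ F set0 x) => [[b]|]; by rewrite ?inE ?andbT.
have [aE hA hatt] := reach_inv hr a0 R0 erefl.
split; first exact: pref_exists.
move=> I /and3P[aI allI _].
have [P [prP EP]] := pref_exists aE.
have inAll : forall P', preferred F P' -> I \subset P'.
  by move=> P' h; move/forallP: allI => /(_ P'); rewrite h.
have IP := inAll P prP.
have [_ cfP _] := admP (proj1 (andP prP)).
have [sI cfI defI] := admP aI.
case: (boolP (I \subset E)) => // nIE; exfalso.
set X := I :\: E.
have XR : forall x, x \in X -> x \in Rd F E.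
  move=> x; rewrite in_setD => /andP[xE xI].
  rewrite /Rd in_setD in_setU (negbTE xE) (subsetP sI _ xI) andbT /=.
  apply/plusP => [[c cE hc]].
  by have := cfP c x (subsetP EP _ cE) (subsetP IP _ xI); rewrite hc.
have aX : admissible G X.
  apply: admI.
  - by apply/subsetP => x /XR; rewrite hA.
  - move=> a b; rewrite !in_setD => /andP[_ aI'] /andP[_ bI'].
    apply/negP => /(attGG hA hatt); apply/negP; exact: cfI.
  - move=> a b aX h; have := aX; rewrite in_setD => /andP[_ aI'].
    have [c cI hc] := defI a b aI' (attGG hA hatt h).
    have [bG _] := attG_args h.
    have cE : c \notin E.
      apply/negP => cE; move: bG; rewrite hA => /RdP[_ _ /plusP[]]; by exists c.
    have cX : c \in X by rewrite in_setD cE cI.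
    exists c => //; apply: (attFG hA hatt (XR _ cX)) => //; by rewrite -hA.
have nX : X != set0 by rewrite setD_eq0.
have [S iS SX] := init_exists aX nX.
have SIS : S \in IS G by rewrite /IS inE.
have : S \notin ISu G :|: ISuc G by move/eqP: hb => ->; rewrite inE.
rewrite in_setU negb_or /ISu /ISuc !inE => /andP[nu].
rewrite iS /= in nu *.
rewrite nu /= => /forallPn [S'' ]; rewrite negb_imply negbK => /andP[S''IS hatk].
have iS'' : initial G S'' by move: S''IS; rewrite /IS inE.
have aS'' : admissible G S'' by case/and3P: iS''.
have [P2 [prP2 sub2]] := pref_exists (adm_union hA hatt aE aS'').
have IP2 := inAll P2 prP2.
have [_ cfP2 _] := admP (proj1 (andP prP2)).
move/set0Pn: hatk => [y]; rewrite in_setI => /andP[/plusP[b bS'' hby] yS].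
have yI : y \in I by move: (subsetP SX _ yS); rewrite in_setD => /andP[].
have bU : b \in E :|: S'' by rewrite in_setU bS'' orbT.
have := cfP2 b y (subsetP sub2 _ bU) (subsetP IP2 _ yI).
by rewrite (attGG hA hatt hby).
Qed.
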